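(* Let $(R,\mathfrak{m})$ be a local ring with residue field $k$, let $S=\mathrm{Spec}\,R$, let $A$ be a finite abelian group and let $H\hookrightarrow D_S(A)$ be a closed subgroup scheme, with $R[H]=R[A]/I$ for a Hopf ideal $I$. If the order of $A$ is invertible in $R$, then the quotient map $R[H]\to R[H]\otimes_R k$ induces a bijection on group-like elements.
   Context: $D_S(A)=\mathrm{Spec}\,R[A]$. An element $g$ of a Hopf algebra is group-like if $\Delta(g)=g\otimes g$ and $\varepsilon(g)=1$. $H$ need not be flat over $R$. *)

(* Defs.v *)
From HB Require Import structures.
From mathcomp Require Import all_boot all_order all_algebra.
Set Implicit Arguments. Unset Strict Implicit. Unset Printing Implicit Defensive.
Import Order.TTheory GRing.Theory Num.Theory.
Local Open Scope ring_scope.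

(* The group algebra T[A] of a finite abelian group A (written additively,
   A : finZmodType) over a commutative ring T is modelled as the free
   T-module {ffun A -> T} (f = \sum_a f a . e_a), with convolution product.
   T[A] (x)_T T[A] = T[A x A] is modelled by functions A -> A -> T.          *)

Section GroupAlgebra.
Variables (T : comRingType) (A : finZmodType).

Definition conv (f g : {ffun A -> T}) : {ffun A -> T} :=
  [ffun c => \sum_(a : A) f a * g (c - a)].

(* comultiplication Delta(e_a) = e_a (x) e_a, extended linearly *)
Definition comult (f : {ffun A -> T}) : A -> A -> T :=
  fun a b => if a == b then f a else 0.

Definition counit (f : {ffun A -> T}) : T := \sum_(a : A) f a.

Definition antipode (f : {ffun A -> T}) : {ffun A -> T} := [ffun a => f (- a)].

Definition tens (f g : {ffun A -> T}) : A -> A -> T := fun a b => f a * g b.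

Definition is_ideal (I : {ffun A -> T} -> Prop) : Prop :=
  [/\ I 0,
      (forall f g, I f -> I g -> I (f - g)) &
      (forall f g, I f -> I (conv g f))].

(* The kernel of T[A] (x) T[A] -> (T[A]/I) (x) (T[A]/I), namely
   I (x) T[A] + T[A] (x) I  (inside T[A x A]; since T[A] is free,
   I (x) T[A] is the set of h all of whose "columns" h(-,b) lie in I). *)
Definition in_tensor_ideal (I : {ffun A -> T} -> Prop) (h : A -> A -> T) : Prop :=
  exists h1 h2 : A -> A -> T,
    [/\ (forall a b, h a b = h1 a b + h2 a b),
        (forall b, I [ffun a => h1 a b]) &
        (forall a, I [ffun b => h2 a b])].

Definition hopf_ideal (I : {ffun A -> T} -> Prop) : Prop :=
  [/\ is_ideal I,
      (forall f, I f -> in_tensor_ideal I (comult f)),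
      (forall f, I f -> counit f = 0) &
      (forall f, I f -> I (antipode f))].

(* f (a representative of its class in T[A]/I) is group-like in the Hopf
   algebra T[A]/I : Delta(f) = f (x) f in (T[A]/I)(x)(T[A]/I), eps(f) = 1. *)
Definition grouplike (I : {ffun A -> T} -> Prop) (f : {ffun A -> T}) : Prop :=
  counit f = 1 /\ in_tensor_ideal I (fun a b => comult f a b - tens f f a b).

End GroupAlgebra.

Definition local_ring (R : comUnitRingType) : Prop :=
  forall x y : R, x \notin GRing.unit -> y \notin GRing.unit ->
                  x + y \notin GRing.unit.

Definition red (R : comUnitRingType) (k : fieldType) (pi : {rmorphism R -> k})
  (A : finZmodType) (f : {ffun A -> R}) : {ffun A -> k} := [ffun a => pi (f a)].

(* the ideal I (x)_R k of k[A] = R[A] (x)_R k, i.e. the image of I *)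
Definition red_ideal (R : comUnitRingType) (k : fieldType) (pi : {rmorphism R -> k})
  (A : finZmodType) (I : {ffun A -> R} -> Prop) : {ffun A -> k} -> Prop :=
  fun u => exists f, I f /\ u = red pi f.

(* Main.v *)
Require Import Defs.
From HB Require Import structures.
From mathcomp Require Import all_boot all_order all_algebra.
From Stdlib Require Import Classical IndefiniteDescription.
From mathcomp Require Import ring.
Set Implicit Arguments. Unset Strict Implicit. Unset Printing Implicit Defensive.
Import Order.TTheory GRing.Theory Num.Theory.
Local Open Scope ring_scope.



Section GA.
Variables (T : comRingType) (A : finZmodType).

Definition GA := {ffun A -> T}.
Definition ee (a : A) : GA := [ffun x => (x == a)%:R].

Lemma convE (f g : {ffun A -> T}) c : conv f g c = \sum_a f a * g (c - a).
Proof. by rewrite ffunE. Qed.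

Lemma convC : commutative (@conv T A).
Proof.
move=> f g; apply/ffunP=> c; rewrite !convE (reindex_inj (subrI c)) /=.
by apply: eq_bigr => b _; rewrite subKr mulrC.
Qed.

Lemma conv1 : left_id (ee 0) (@conv T A).
Proof.
move=> f; apply/ffunP=> c; rewrite convE (bigD1 0) //= big1 ?addr0.
  by rewrite ffunE eqxx mul1r subr0.
by move=> a /negPf na; rewrite ffunE na mul0r.
Qed.

Lemma convDl : left_distributive (@conv T A) +%R.
Proof.
move=> f g h; apply/ffunP=> c; rewrite !ffunE -big_split /=.
by apply: eq_bigr => a _; rewrite ffunE mulrDl.
Qed.

Lemma convA : associative (@conv T A).
Proof.
move=> f g h; apply/ffunP=> c; rewrite !convE.
under [LHS]eq_bigr do rewrite convE big_distrr /=.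
under [RHS]eq_bigr do rewrite convE big_distrl /=.
rewrite [RHS]exchange_big /=; apply: eq_bigr => b _.
rewrite [RHS](reindex_inj (addrI b)) /=; apply: eq_bigr => a _.
have -> : b + a - b = a by rewrite addrC addKr.
by rewrite opprD addrA mulrA.
Qed.

HB.instance Definition _ := GRing.Zmodule.on GA.
HB.instance Definition _ := GRing.Zmodule_isComPzRing.Build GA convA convC conv1 convDl.

Lemma mulGA (f g : GA) : f * g = conv f g. Proof. by []. Qed.
Lemma oneGA : (1 : GA) = ee 0. Proof. by []. Qed.

Lemma mul_at (p q : GA) c : (p * q) c = \sum_a p a * q (c - a).
Proof. by rewrite mulGA convE. Qed.

Lemma ee_mul_at x (p : GA) c : (ee x * p) c = p (c - x).
Proof.
rewrite mul_at (bigD1 x) //= big1 ?addr0; first by rewrite ffunE eqxx mul1r.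
by move=> a /negPf na; rewrite ffunE na mul0r.
Qed.

Lemma addGA_at (p q : GA) c : (p + q) c = p c + q c.
Proof. by rewrite ffunE. Qed.
Lemma oppGA_at (p : GA) c : (- p) c = - p c.
Proof. by rewrite ffunE. Qed.
Lemma subGA_at (p q : GA) c : (p - q) c = p c - q c.
Proof. by rewrite ffunE /= ffunE. Qed.
Lemma sumGA_at (X : Type) (r : seq X) (P : pred X) (F : X -> GA) c :
  (\sum_(i <- r | P i) F i) c = \sum_(i <- r | P i) F i c.
Proof. exact: sum_ffunE. Qed.
Lemma zeroGA_at c : (0 : GA) c = 0.
Proof. by rewrite ffunE. Qed.

Lemma eeM x y : ee x * ee y = ee (x + y) :> GA.
Proof.
apply/ffunP => c; rewrite ee_mul_at !ffunE.
by rewrite subr_eq addrC.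
Qed.

Definition push (phi : A -> A) (f : {ffun A -> T}) : {ffun A -> T} :=
  [ffun c => \sum_a (phi a == c)%:R * f a].

Definition T2 (phi chi : A -> A) (h : A -> A -> T) : {ffun A -> T} :=
  [ffun c => \sum_a \sum_b (phi a + chi b == c)%:R * h a b].

Lemma T2D phi chi h h' : T2 phi chi (fun a b => h a b + h' a b) =
   (T2 phi chi h : GA) + T2 phi chi h'.
Proof.
apply/ffunP => c; rewrite addGA_at !ffunE -big_split /=.
apply: eq_bigr => a _; rewrite -big_split /=.
by apply: eq_bigr => b _; rewrite mulrDr.
Qed.

Lemma T2B phi chi h h' : T2 phi chi (fun a b => h a b - h' a b) =
   (T2 phi chi h : GA) - T2 phi chi h'.
Proof.
apply/ffunP => c; rewrite subGA_at !ffunE -sumrB /=.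
apply: eq_bigr => a _; rewrite -sumrB /=.
by apply: eq_bigr => b _; rewrite mulrBr.
Qed.

Lemma T2_col phi chi h : T2 phi chi h =
  \sum_b (ee (chi b) * push phi [ffun a => h a b] : GA).
Proof.
apply/ffunP => c; rewrite sumGA_at ffunE exchange_big /=.
apply: eq_bigr => b _; rewrite ee_mul_at ffunE; apply: eq_bigr => a _.
by rewrite ffunE [phi a == _]eq_sym subr_eq [c == _]eq_sym.
Qed.

Lemma T2_row phi chi h : T2 phi chi h =
  \sum_a (ee (phi a) * push chi [ffun b => h a b] : GA).
Proof.
apply/ffunP => c; rewrite sumGA_at ffunE /=.
apply: eq_bigr => a _; rewrite ee_mul_at ffunE; apply: eq_bigr => b _.
by rewrite ffunE [chi b == _]eq_sym subr_eq [c == _]eq_sym addrC.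
Qed.


Lemma sum_pick (y : A) (F : A -> T) : \sum_x (y == x)%:R * F x = F y.
Proof.
rewrite (bigD1 y) //= eqxx mul1r big1 ?addr0 // => x nx.
by rewrite eq_sym (negPf nx) mul0r.
Qed.

Lemma push_ext phi phi' f : phi =1 phi' -> push phi f = push phi' f.
Proof. by move=> e; apply/ffunP => c; rewrite !ffunE; apply: eq_bigr => a _; rewrite e. Qed.

Lemma push_id f : push id f = f.
Proof.
apply/ffunP => c; rewrite ffunE (bigD1 c) //= eqxx mul1r big1 ?addr0 //.
by move=> a /negPf ->; rewrite mul0r.
Qed.

Lemma push_neg f : push (fun a => - a) f = antipode f.
Proof.
apply/ffunP => c; rewrite !ffunE (bigD1 (- c)) //= opprK eqxx mul1r big1 ?addr0 //.
by move=> a na; rewrite (_ : (- a == c) = false) ?mul0r //; apply/negbTE; apply: contra na => /eqP <-; rewrite opprK.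
Qed.

Lemma push0 f : push (fun _ => 0) f = [ffun c => (c == 0)%:R * counit f].
Proof.
apply/ffunP => c; rewrite !ffunE /counit big_distrr /=; apply: eq_bigr => a _.
by rewrite eq_sym.
Qed.

Lemma push0_1 f : counit f = 1 -> push (fun _ => 0) f = 1 :> GA.
Proof. by move=> e; rewrite push0 e; apply/ffunP => c; rewrite !ffunE mulr1. Qed.

Lemma push0_0 f : counit f = 0 -> push (fun _ => 0) f = 0 :> GA.
Proof. by move=> e; rewrite push0 e; apply/ffunP => c; rewrite !ffunE mulr0. Qed.

Lemma T2_ext phi chi h h' : (forall a b, h a b = h' a b) -> T2 phi chi h = T2 phi chi h'.
Proof.
move=> e; apply/ffunP => c; rewrite !ffunE; apply: eq_bigr => a _; apply: eq_bigr => b _.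
by rewrite e.
Qed.

Lemma T2_comult phi chi f : T2 phi chi (comult f) = push (fun a => phi a + chi a) f.
Proof.
apply/ffunP => c; rewrite !ffunE; apply: eq_bigr => a _.
rewrite (bigD1 a) //= /comult eqxx big1 ?addr0 // => b nb.
by rewrite (eq_sym a b) (negPf nb) mulr0.
Qed.

Lemma T2_tens phi chi f g : T2 phi chi (tens f g) = (push phi f : GA) * push chi g.
Proof.
apply/ffunP => c; rewrite mul_at ffunE.
under [RHS]eq_bigr do rewrite ffunE big_distrl /=.
rewrite [RHS]exchange_big /=; apply: eq_bigr => a _.
under [RHS]eq_bigr do rewrite -mulrA.
rewrite sum_pick ffunE big_distrr /=; apply: eq_bigr => b _.
rewrite /tens mulrCA; congr (_ * _); congr (_%:R * _).
by rewrite [chi b == _]eq_sym subr_eq [c == _]eq_sym addrC.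
Qed.

Section Ideal.
Variable I : {ffun A -> T} -> Prop.
Hypothesis hI : is_ideal I.

Lemma I0 : I 0. Proof. by case: hI. Qed.
Lemma IB (f g : GA) : I f -> I g -> I (f - g). Proof. by case: hI => _ H _; apply: H. Qed.
Lemma IN (f : GA) : I f -> I (- f).
Proof. by move=> If; rewrite -sub0r; apply: IB => //; apply: I0. Qed.
Lemma ID (f g : GA) : I f -> I g -> I (f + g).
Proof. by move=> If Ig; rewrite -[g]opprK; apply: IB => //; apply: IN. Qed.
Lemma IM (g f : GA) : I f -> I (g * f). Proof. by case: hI => _ _ H; apply: H. Qed.
Lemma IMr (f g : GA) : I f -> I (f * g). Proof. by move=> If; rewrite mulrC; apply: IM. Qed.
Lemma Isum (X : Type) (r : seq X) (P : pred X) (F : X -> GA) :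
  (forall i, P i -> I (F i)) -> I (\sum_(i <- r | P i) F i).
Proof.
move=> H; apply: (big_ind I) => //; [exact: I0 | move=> x y; exact: ID].
Qed.

Lemma T2_TI phi chi h :
  (forall f, I f -> I (push phi f)) -> (forall f, I f -> I (push chi f)) ->
  in_tensor_ideal I h -> I (T2 phi chi h).
Proof.
move=> Hphi Hchi [h1 [h2 [e H1 H2]]].
rewrite (T2_ext phi chi e) T2D; apply: ID.
  by rewrite T2_col; apply: Isum => b _; apply: IM; apply: Hphi.
by rewrite T2_row; apply: Isum => a _; apply: IM; apply: Hchi.
Qed.

End Ideal.


Lemma cardA_mul (a : A) : a *+ #|A| = 0.
Proof.
have e : \sum_(b : A) (a + b) = \sum_(b : A) b.
  by rewrite (reindex_inj (addrI (- a))) /=; apply: eq_bigr => b _; rewrite addNKr.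
move: e; rewrite big_split /= sumr_const => /eqP.
by rewrite -subr_eq0 addrK => /eqP.
Qed.

Section Hopf.
Variable I : {ffun A -> T} -> Prop.
Hypothesis hH : hopf_ideal I.
Let hI : is_ideal I. Proof. by case: hH. Qed.

Definition gl (f : {ffun A -> T}) :=
  counit f = 1 /\ in_tensor_ideal I (fun a b => comult f a b - tens f f a b).

Lemma push_negI : forall f, I f -> I (push (fun a => - a) f).
Proof. by move=> f; rewrite push_neg; case: hH => _ _ _; apply. Qed.

Lemma push_idI : forall f, I f -> I (push id f).
Proof. by move=> f; rewrite push_id. Qed.

Lemma push_mulI j f : I f -> I (push (fun a => a *+ j) f).
Proof.
elim: j f => [|j IH] f If.
  rewrite (push_ext _ (phi' := fun _ => 0)) ?push0_0; first exact: (I0 hI).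
    by case: hH => _ _ H _; apply: H.
  by move=> a; rewrite mulr0n.
rewrite (push_ext _ (phi' := fun a => a *+ j + id a)); last by move=> a; rewrite mulrSr.
rewrite -T2_comult; apply: (T2_TI hI).
- by move=> f0 Hf0; apply: IH.
- by move=> f0; rewrite push_id.
- by case: hH => _ H _ _; apply: H.
Qed.

Lemma gl_rel phi chi g :
  (forall f, I f -> I (push phi f)) -> (forall f, I f -> I (push chi f)) ->
  gl g -> I ((push (fun a => phi a + chi a) g : GA) - (push phi g : GA) * push chi g).
Proof.
move=> Hp Hc [_ Hg]; rewrite -T2_comult -T2_tens -T2B.
exact: (T2_TI hI) Hg.
Qed.

Lemma gl_anti g : gl g -> I (1 - (g : GA) * antipode g).
Proof.
move=> gg; have := gl_rel push_idI push_negI gg.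
rewrite push_id push_neg (push_ext _ (phi' := fun _ => 0)) ?push0_1 //.
  by case: gg.
by move=> a; rewrite subrr.
Qed.

Lemma gl_pow g j : gl g -> I ((push (fun a => a *+ j) g : GA) - (g : GA) ^+ j).
Proof.
move=> gg; elim: j => [|j IH].
  rewrite (push_ext _ (phi' := fun _ => 0)) ?push0_1 ?expr0 ?subrr; first exact: (I0 hI).
    by case: gg.
  by move=> a; rewrite mulr0n.
have := gl_rel (push_mulI j) push_idI gg.
rewrite (push_ext _ (phi' := fun a => a *+ j.+1)); last by move=> a; rewrite mulrSr.
rewrite push_id => H.
have -> : (push (fun a => a *+ j.+1) g : GA) - (g : GA) ^+ j.+1 =
   ((push (fun a => a *+ j.+1) g : GA) - (push (fun a => a *+ j) g : GA) * g)
   + ((push (fun a => a *+ j) g : GA) - (g : GA) ^+ j) * g.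
  by rewrite exprSr mulrBl addrA subrK.
by apply: (ID hI) => //; apply: (IMr hI).
Qed.

Lemma gl_n g : gl g -> I (1 - (g : GA) ^+ #|A|).
Proof.
move=> gg; have := gl_pow #|A| gg.
rewrite (push_ext _ (phi' := fun _ => 0)) ?push0_1 //; first by case: gg.
by move=> a; rewrite cardA_mul.
Qed.

End Hopf.

End GA.
Arguments ee {T A} a.



Section Unit.
Variables (R : comUnitRingType) (k : fieldType) (pi : {rmorphism R -> k}) (A : finZmodType).
Hypothesis hpi : forall x : R, pi x = 0 <-> x \notin GRing.unit.

Lemma unit_lem (d : R) (u : GA R A) : d \is a GRing.unit ->
  (forall a, pi (u a) = (a == 0)%:R * pi d) -> exists w : GA R A, u * w = 1.
Proof.
move=> ud hu.
pose M : 'M[R]_#|A| := \matrix_(i, j) (d^-1 * u (enum_val i - enum_val j)).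
have hM : map_mx pi M = 1%:M.
  apply/matrixP => i j; rewrite !mxE rmorphM hu mulrCA -rmorphM mulVr // rmorph1 mulr1.
  by rewrite subr_eq0 (inj_eq enum_val_inj).
have uM : M \in unitmx.
  rewrite unitmxE; apply/negPn/negP => /hpi; rewrite -det_map_mx hM det1.
  by move/eqP; rewrite oner_eq0.
exists [ffun b => d^-1 * invmx M (enum_rank b) (enum_rank (0 : A))].
apply/ffunP => c; rewrite mul_at.
have := congr1 (fun X : 'M[R]_#|A| => X (enum_rank c) (enum_rank (0:A))) (mulmxV uM).
rewrite /= !mxE (inj_eq enum_rank_inj) oneGA ffunE => <-.
rewrite (reindex enum_rank) /=; last first.
  by apply: onW_bij; exact: (Bijective enum_rankK enum_valK).
rewrite (reindex_inj (subrI c)) /=; apply: eq_bigr => b _.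
rewrite !mxE ffunE subKr (_ : enum_val (enum_rank b) = b); last exact: enum_rankK.
rewrite (_ : enum_val (enum_rank c) = c); last exact: enum_rankK.
by rewrite mulrCA mulrA.
Qed.

End Unit.



Section Field.
Variables (F : fieldType) (A : finZmodType).

Definition dot (psi : A -> F) (f : {ffun A -> F}) := \sum_a psi a * f a.
Definition perp (J : {ffun A -> F} -> Prop) psi := forall f, J f -> dot psi f = 0.
Definition scl (t : F) (f : {ffun A -> F}) : {ffun A -> F} := [ffun a => t * f a].
Definition subsp (J : {ffun A -> F} -> Prop) :=
  [/\ J 0, (forall f g, J f -> J g -> J (f - g)) & (forall t f, J f -> J (scl t f))].

Lemma ffB (f g : {ffun A -> F}) a : (f - g) a = f a - g a.
Proof. by rewrite !ffunE /= ?ffunE. Qed.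
Lemma ffD (f g : {ffun A -> F}) a : (f + g) a = f a + g a.
Proof. by rewrite !ffunE. Qed.
Lemma ff0 a : (0 : {ffun A -> F}) a = 0.
Proof. by rewrite !ffunE. Qed.

Lemma dot_ext psi psi' f : psi =1 psi' -> dot psi f = dot psi' f.
Proof. by move=> e; apply: eq_bigr => a _; rewrite e. Qed.

Lemma dotB psi f g : dot psi (f - g) = dot psi f - dot psi g.
Proof. by rewrite /dot -sumrB; apply: eq_bigr => a _; rewrite !ffunE mulrBr. Qed.

Lemma dot_scl psi t f : dot psi (scl t f) = t * dot psi f.
Proof. by rewrite /dot big_distrr; apply: eq_bigr => a _; rewrite ffunE mulrCA. Qed.

Lemma dot_delta psi x c f :
  dot (fun a => psi a + (a == x)%:R * c) f = dot psi f + c * f x.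
Proof.
rewrite /dot; under eq_bigr do rewrite mulrDl.
rewrite big_split /=; congr (_ + _).
rewrite (bigD1 x) //= eqxx mul1r big1 ?addr0 // => a /negPf ->.
by rewrite mul0r mul0r.
Qed.

Lemma dual_aux (s : seq A) : forall J, subsp J ->
  (forall f, J f -> forall a, a \notin s -> f a = 0) ->
  forall v : {ffun A -> F}, (forall a, a \notin s -> v a = 0) -> ~ J v ->
  exists psi, perp J psi /\ dot psi v <> 0.
Proof.
elim: s => [|x s IH] J [J0 JB JS] Jsupp v vsupp nJv.
  by exfalso; apply: nJv; have -> : v = 0 by apply/ffunP => a; rewrite ffunE vsupp.
have JD : forall f g, J f -> J g -> J (f + g).
  move=> f g Jf Jg; rewrite -[g]opprK -[- g]sub0r; by apply: (JB) => //; apply: (JB).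
case: (classic (exists w, J w /\ w x <> 0)) => [[w [Jw wx]]|nw].
  pose J' := fun g => J g /\ g x = 0.
  have sJ' : subsp J'.
    split; first by split => //; rewrite ff0.
      by move=> f g [Jf fx] [Jg gx]; split; [exact: (JB) | rewrite ffB fx gx subrr].
    by move=> t f [Jf fx]; split; [exact: (JS) | rewrite ffunE fx mulr0].
  have J'supp : forall f, J' f -> forall a, a \notin s -> f a = 0.
    move=> f [Jf fx] a ans; case: (eqVneq a x) => [->//|ax].
    by apply: Jsupp => //; rewrite inE negb_or ax ans.
  pose t := v x / w x.
  pose v' := v - scl t w.
  have v'x : v' x = 0 by rewrite /v' ffB ffunE /t mulfVK ?subrr //; apply/eqP.
  have v'supp : forall a, a \notin s -> v' a = 0.
    move=> a ans; case: (eqVneq a x) => [->//|ax].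
    have axs : a \notin x :: s by rewrite inE negb_or ax ans.
    by rewrite /v' ffB ffunE vsupp // Jsupp // mulr0 subrr.
  have nJ'v' : ~ J' v'.
    move=> [Jv' _]; apply: nJv.
    have -> : v = v' - scl (- t) w.
      by apply/ffunP => a; rewrite /v' !ffB !ffunE mulNr opprK subrK.
    by apply: (JB) => //; apply: (JS).
  have [psi' [ppsi' dpsi']] := IH J' sJ' J'supp v' v'supp nJ'v'.
  pose cst := - dot psi' w / w x.
  exists (fun a => psi' a + (a == x)%:R * cst).
  have dw : dot (fun a => psi' a + (a == x)%:R * cst) w = 0.
    by rewrite dot_delta /cst mulfVK ?subrr //; apply/eqP.
  split.
    move=> f Jf.
    pose g := f - scl (f x / w x) w.
    have J'g : J' g.
      split; first by apply: (JB) => //; apply: (JS).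
      by rewrite /g ffB ffunE mulfVK ?subrr //; apply/eqP.
    have -> : f = g + scl (f x / w x) w by rewrite subrK.
    rewrite /dot -/(dot _ _).
    have -> : dot (fun a => psi' a + (a == x)%:R * cst) (g + scl (f x / w x) w) =
      dot (fun a => psi' a + (a == x)%:R * cst) (g - scl (- (f x / w x)) w).
      by congr dot; apply/ffunP => a; rewrite ffB ffD !ffunE mulNr opprK.
    rewrite dotB dot_scl dw mulr0 subr0 dot_delta ppsi' //.
    by case: J'g => _ ->; rewrite mulr0 addr0.
  have -> : v = v' - scl (- t) w.
    by apply/ffunP => a; rewrite /v' !ffB !ffunE mulNr opprK subrK.
  by rewrite dotB dot_scl dw mulr0 subr0 dot_delta v'x mulr0 addr0.
have wx0 : forall w, J w -> w x = 0.
  by move=> w Jw; apply: NNPP => wx; apply: nw; exists w.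
case: (eqVneq (v x) 0) => vx.
  apply: (IH J) => //.
  - move=> f Jf a ans; case: (eqVneq a x) => [->|ax]; first exact: wx0.
    by apply: Jsupp => //; rewrite inE negb_or ax ans.
  - move=> a ans; case: (eqVneq a x) => [->//|ax].
    by apply: vsupp; rewrite inE negb_or ax ans.
exists (fun a => 0 + (a == x)%:R * 1); split.
  by move=> f Jf; rewrite dot_delta /dot big1 ?add0r ?mul1r ?wx0 // => a _; rewrite mul0r.
rewrite dot_delta /dot big1 ?add0r ?mul1r; first exact/eqP.
by move=> a _; rewrite mul0r.
Qed.

Lemma duality J : subsp J -> forall v, (forall psi, perp J psi -> dot psi v = 0) -> J v.
Proof.
move=> sJ v H; apply: NNPP => nJv.
have [psi [ppsi dpsi]] := dual_aux (s := enum A) sJ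
  (fun f _ a an => False_ind _ (negP an (mem_enum _ a)))
  (fun a an => False_ind _ (negP an (mem_enum _ a))) nJv.
by apply: dpsi; apply: H.
Qed.


Section K.
Variable J : {ffun A -> F} -> Prop.
Hypothesis sJ : subsp J.
Hypothesis Jeps : forall f, J f -> counit f = 0.
Hypothesis Jcom : forall f, J f -> in_tensor_ideal J (comult f).

Lemma perp_tens psi phi h : perp J psi -> perp J phi -> in_tensor_ideal J h ->
  \sum_a \sum_b psi a * phi b * h a b = 0.
Proof.
move=> ppsi pphi [h1 [h2 [e H1 H2]]].
rewrite (eq_bigr (fun a => \sum_b psi a * phi b * h1 a b + \sum_b psi a * phi b * h2 a b)); last first.
  by move=> a _; rewrite -big_split; apply: eq_bigr => b _; rewrite e mulrDr.
rewrite big_split /= exchange_big /=.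
rewrite big1 ?add0r.
  apply: big1 => a _.
  rewrite (_ : \sum_b _ = psi a * dot phi [ffun b => h2 a b]); first by rewrite pphi ?mulr0.
  rewrite /dot big_distrr /=; apply: eq_bigr => b _.
  by rewrite ffunE mulrA.
move=> b _.
rewrite (_ : \sum_a _ = phi b * dot psi [ffun a => h1 a b]); first by rewrite ppsi ?mulr0.
rewrite /dot big_distrr /=; apply: eq_bigr => a _.
by rewrite ffunE mulrCA mulrA.
Qed.

Lemma dot_comult psi phi f :
  \sum_a \sum_b psi a * phi b * comult f a b = dot (fun a => psi a * phi a) f.
Proof.
apply: eq_bigr => a _; rewrite (bigD1 a) //= /comult eqxx big1 ?addr0 //.
by move=> b nb; rewrite (eq_sym a b) (negPf nb) mulr0.
Qed.

Lemma perp_mul psi phi : perp J psi -> perp J phi -> perp J (fun a => psi a * phi a).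
Proof. by move=> p1 p2 f Jf; rewrite -dot_comult; apply: perp_tens => //; apply: Jcom. Qed.

Lemma dot_one f : dot (fun _ => 1) f = counit f.
Proof. by rewrite /dot /counit; apply: eq_bigr => a _; rewrite mul1r. Qed.

Lemma dot_aff c1 c2 psi f : dot (fun a => c1 * psi a + c2) f = c1 * dot psi f + c2 * counit f.
Proof.
rewrite /dot /counit !big_distrr -big_split /=; apply: eq_bigr => a _.
by rewrite mulrDl mulrA.
Qed.

Lemma perp_aff c1 c2 psi : perp J psi -> perp J (fun a => c1 * psi a + c2).
Proof. by move=> p f Jf; rewrite dot_aff p // Jeps // !mulr0 addr0. Qed.

Lemma chi_mul u psi phi : in_tensor_ideal J (fun a b => comult u a b - tens u u a b) ->
  perp J psi -> perp J phi ->
  dot (fun a => psi a * phi a) u = dot psi u * dot phi u.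
Proof.
move=> gu p1 p2; have := perp_tens p1 p2 gu.
rewrite (eq_bigr (fun a => \sum_b psi a * phi b * comult u a b - \sum_b psi a * phi b * tens u u a b)); last first.
  by move=> a _; rewrite -sumrB; apply: eq_bigr => b _; rewrite mulrBr.
rewrite sumrB dot_comult => /eqP; rewrite subr_eq0 => /eqP ->.
rewrite /dot big_distrl /=; apply: eq_bigr => a _; rewrite big_distrr /=.
by apply: eq_bigr => b _; rewrite /tens mulrACA.
Qed.

Lemma Klem (u : {ffun A -> F}) : counit u = 1 ->
  in_tensor_ideal J (fun a b => comult u a b - tens u u a b) ->
  exists c, J (u - ee c).
Proof.
move=> eu gu.
have [c Hc] : exists c, forall psi, perp J psi -> dot psi u = psi c.
  apply: NNPP => nc.
  have H : forall c, exists psi, perp J psi /\ dot psi u <> psi c.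
    move=> c; apply: NNPP => nps; apply: nc; exists c => psi ppsi.
    by apply: NNPP => ne; apply: nps; exists psi.
  pose th c := proj1_sig (constructive_indefinite_description _ (H c)).
  have thP c : perp J (th c) /\ dot (th c) u <> th c c.
    exact: proj2_sig (constructive_indefinite_description _ (H c)).
  pose D c := th c c - dot (th c) u.
  have Dn c : D c != 0 by rewrite subr_eq0 eq_sym; apply/eqP; case: (thP c).
  pose t c a := (D c)^-1 * th c a + (- (D c)^-1 * dot (th c) u).
  have tp c : perp J (t c) by apply: perp_aff; case: (thP c).
  have tc c : t c c = 1.
    by rewrite /t mulNr -mulrBr mulVf.
  have tu c : dot (t c) u = 0.
    by rewrite dot_aff eu mulr1 mulNr subrr.
  have key : forall r : seq A,
    perp J (fun a => \prod_(c <- r) (1 - t c a)) /\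
    dot (fun a => \prod_(c <- r) (1 - t c a)) u = 1.
    elim => [|x r [IHp IHd]].
      split.
        move=> f Jf; rewrite /dot (eq_bigr (fun a => f a)); first exact: Jeps.
        by move=> a _; rewrite big_nil mul1r.
      rewrite /dot (eq_bigr (fun a => u a)) //.
      by move=> a _; rewrite big_nil mul1r.
    have p1 : perp J (fun a => (-1) * t x a + 1) by apply: perp_aff.
    have E : forall a, \prod_(c <- x :: r) (1 - t c a) =
        ((-1) * t x a + 1) * \prod_(c <- r) (1 - t c a).
      by move=> a; rewrite big_cons mulN1r addrC.
    split.
      by move=> f Jf; rewrite (dot_ext _ E); exact: (perp_mul p1 IHp) f Jf.
    rewrite (dot_ext _ E) (chi_mul gu) // IHd mulr1 dot_aff tu eu.
    by rewrite mulr0 add0r mulr1.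
  have [_ d1] := key (index_enum A).
  move: d1; rewrite /dot big1; last first.
    move=> a _; rewrite (bigD1_seq a) ?mem_index_enum ?index_enum_uniq //= tc subrr.
    by rewrite !mul0r.
  by move=> /esym/eqP; rewrite oner_eq0.
exists c; apply: duality => // psi ppsi.
rewrite dotB Hc //; rewrite /dot (bigD1 c) //= ffunE eqxx mulr1 big1 ?addr0 ?subrr //.
by move=> a /negPf na; rewrite ffunE na mulr0.
Qed.

End K.

End Field.



Section Eqm.
Variables (T : comRingType) (A : finZmodType) (I : {ffun A -> T} -> Prop).
Hypothesis hI : is_ideal I.
Definition eqm (x y : GA T A) := I (x - y).
Lemma eqm_refl x : eqm x x. Proof. by rewrite /eqm subrr; apply: (I0 hI). Qed.
Lemma eqm_sym x y : eqm x y -> eqm y x.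
Proof. by rewrite /eqm => H; rewrite -opprB; apply: (IN hI). Qed.
Lemma eqm_trans x y z : eqm x y -> eqm y z -> eqm x z.
Proof. by rewrite /eqm => H1 H2; rewrite -(subrKA y); apply: (ID hI). Qed.
Lemma eqm_mul x x' y y' : eqm x x' -> eqm y y' -> eqm (x * y) (x' * y').
Proof.
rewrite /eqm => H1 H2.
have -> : x * y - x' * y' = (x - x') * y + x' * (y - y').
  by rewrite mulrBl mulrBr addrA subrK.
by apply: (ID hI); [apply: (IMr hI) | apply: (IM hI)].
Qed.
Lemma eqm_exp x y n : eqm x y -> eqm (x ^+ n) (y ^+ n).
Proof. by move=> H; elim: n => [|n IH]; [apply: eqm_refl | rewrite !exprS; apply: eqm_mul]. Qed.
End Eqm.

Section Main.
Variables (R : comUnitRingType) (k : fieldType) (pi : {rmorphism R -> k}) (A : finZmodType).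

Lemma red_B (f g : GA R A) : red pi (f - g) = red pi f - red pi g.
Proof. by apply/ffunP => a; rewrite !ffunE /= ?ffunE rmorphB. Qed.
Lemma red_D (f g : GA R A) : red pi (f + g) = red pi f + red pi g.
Proof. by apply/ffunP => a; rewrite !ffunE rmorphD. Qed.
Lemma red_0 : red pi (0 : GA R A) = 0.
Proof. by apply/ffunP => a; rewrite !ffunE rmorph0. Qed.
Lemma red_M (f g : GA R A) : red pi (f * g) = (red pi f : GA k A) * red pi g.
Proof.
apply/ffunP => c; rewrite ffunE !mul_at rmorph_sum; apply: eq_bigr => a _.
by rewrite rmorphM !ffunE.
Qed.
Lemma red_ee c : red pi (ee c : GA R A) = ee c.
Proof. by apply/ffunP => a; rewrite !ffunE rmorph_nat. Qed.
Lemma red_1 : red pi (1 : GA R A) = 1 :> GA k A.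
Proof. by rewrite (oneGA R A) red_ee. Qed.
Lemma red_X (f : GA R A) n : red pi (f ^+ n) = (red pi f : GA k A) ^+ n.
Proof. by elim: n => [|n IH]; rewrite ?expr0 ?red_1 // !exprS red_M IH. Qed.
Lemma red_sum (n : nat) (F : 'I_n -> GA R A) :
  red pi (\sum_(i < n) F i) = \sum_(i < n) (red pi (F i) : GA k A).
Proof.
apply/ffunP => a; rewrite ffunE !sumGA_at rmorph_sum; apply: eq_bigr => i _.
by rewrite ffunE.
Qed.
Lemma counit_red (f : {ffun A -> R}) : counit (red pi f) = pi (counit f).
Proof. by rewrite /counit rmorph_sum; apply: eq_bigr => a _; rewrite ffunE. Qed.

Lemma TI_ext (T : comRingType) (J : {ffun A -> T} -> Prop) h h' :
  (forall a b, h a b = h' a b) -> in_tensor_ideal J h -> in_tensor_ideal J h'.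
Proof.
by move=> e [h1 [h2 [e' H1 H2]]]; exists h1, h2; split => // a b; rewrite -e.
Qed.

Lemma TI_red (I : {ffun A -> R} -> Prop) h : in_tensor_ideal I h ->
  in_tensor_ideal (red_ideal pi I) (fun a b => pi (h a b)).
Proof.
move=> [h1 [h2 [e H1 H2]]].
exists (fun a b => pi (h1 a b)), (fun a b => pi (h2 a b)); split.
- by move=> a b; rewrite e rmorphD.
- move=> b; exists [ffun a => h1 a b]; split => //.
  by apply/ffunP => a; rewrite !ffunE.
- move=> a; exists [ffun b => h2 a b]; split => //.
  by apply/ffunP => b; rewrite !ffunE.
Qed.

Lemma comult_red (f : {ffun A -> R}) a b : comult (red pi f) a b = pi (comult f a b).
Proof. by rewrite /comult; case: (a == b); rewrite ?ffunE ?rmorph0. Qed.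

Lemma gl_red (I : {ffun A -> R} -> Prop) f :
  grouplike I f -> grouplike (red_ideal pi I) (red pi f).
Proof.
move=> [e gf]; split; first by rewrite counit_red e rmorph1.
apply: (TI_ext _ (TI_red gf)) => a b.
by rewrite rmorphB comult_red /tens rmorphM !ffunE.
Qed.

Lemma gl_ee (T : comRingType) (I : {ffun A -> T} -> Prop) c :
  is_ideal I -> grouplike I (ee c).
Proof.
move=> hI; split.
  rewrite /counit (bigD1 c) //= ffunE eqxx big1 ?addr0 // => a /negPf na.
  by rewrite ffunE na.
exists (fun _ _ => 0), (fun _ _ => 0); split.
- move=> a b; rewrite addr0 /comult /tens !ffunE.
  case: (eqVneq a b) => [->|ab]; first by case: (b == c); rewrite ?mulr1 ?mulr0 subrr.
  case: (eqVneq a c) => [ac|]; last by rewrite mul0r subrr.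
  by rewrite -ac eq_sym (negPf ab) mulr0 subrr.
- move=> b; have -> : [ffun _ : A => (0 : T)] = 0 by apply/ffunP => a; rewrite !ffunE.
  exact: (I0 hI).
- move=> a; have -> : [ffun _ : A => (0 : T)] = 0 by apply/ffunP => b; rewrite !ffunE.
  exact: (I0 hI).
Qed.

End Main.



Theorem proposition3p7 (R : comUnitRingType) (k : fieldType)
  (pi : {rmorphism R -> k}) (A : finZmodType) (I : {ffun A -> R} -> Prop) :
  local_ring R ->
  (forall y : k, exists x : R, pi x = y) ->
  (forall x : R, pi x = 0 <-> x \notin GRing.unit) ->
  hopf_ideal I ->
  (#|A|%:R : R) \is a GRing.unit ->
  [/\ (forall f, grouplike I f -> grouplike (red_ideal pi I) (red pi f)),
      (forall f g, grouplike I f -> grouplike I g ->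
         red_ideal pi I (red pi f - red pi g) -> I (f - g)) &
      (forall u, grouplike (red_ideal pi I) u ->
         exists f, grouplike I f /\ red_ideal pi I (red pi f - u))].
Proof.
move=> _ hsurj hpi hH hn.
have hI : is_ideal I by case: hH.
split.
- by move=> f; apply: gl_red.
- move=> f g gf gg [f0 [If0 ef0]].
  pose n := #|A|.
  pose Sg : GA R A := antipode g.
  have A1 : eqm I ((g : GA R A) * Sg) 1.
    by apply: eqm_sym => //; exact: (gl_anti hH gg).
  have Nf : eqm I ((f : GA R A) ^+ n) 1 by apply: eqm_sym => //; exact: (gl_n hH gf).
  have Ng : eqm I ((g : GA R A) ^+ n) 1 by apply: eqm_sym => //; exact: (gl_n hH gg).
  pose q : GA R A := (f : GA R A) * Sg.
  have NS : eqm I (Sg ^+ n) 1.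
    apply: (eqm_trans hI (y := Sg ^+ n * (g : GA R A) ^+ n)).
      by rewrite -{1}[Sg ^+ n]mulr1; apply: eqm_mul => //; [apply: eqm_refl | apply: eqm_sym].
    by rewrite -exprMn mulrC -(expr1n _ n); apply: eqm_exp.
  have Nq : eqm I (q ^+ n) 1.
    by rewrite exprMn -[1](mulr1 (1 : GA R A)); apply: eqm_mul.
  pose f1 : GA R A := (f0 : GA R A) * Sg + ((g : GA R A) * Sg - 1).
  have If1 : I f1.
    by apply: (ID hI); [apply: (IMr hI) | exact: A1].
  have rq : (red pi q : GA k A) - 1 = red pi f1.
    rewrite /f1 red_D red_M red_B red_1 red_M -ef0 /q red_M.
    by rewrite mulrBl addrA subrK.
  pose x : GA R A := q - 1 - f1.
  have rx : red pi x = 0 :> GA k A by rewrite /x !red_B red_1 rq subrr.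
  have qx : eqm I (1 + x) q.
    rewrite /eqm /x (_ : 1 + (q - 1 - f1) - q = - f1); first by apply: (IN hI).
    ring.
  have Nx : I ((1 + x) ^+ n - 1).
    by apply: (eqm_trans hI (y := q ^+ n)) => //; apply: eqm_exp.
  pose U : GA R A := \sum_(i < n) (1 + x) ^+ i.
  have xU : I (x * U).
    by move: Nx; rewrite subrX1 (_ : 1 + x - 1 = x); last ring.
  have rU : forall a, pi (U a) = (a == 0)%:R * pi (n%:R).
    move=> a; have := congr1 (fun h : GA k A => h a) (red_sum pi (fun i : 'I_n => (1 + x) ^+ i)).
    rewrite /= ffunE => ->.
    rewrite (eq_bigr (fun _ => 1)); last by move=> i _; rewrite red_X red_D red_1 rx addr0 expr1n.
    rewrite sumr_const card_ord rmorph_nat.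
    by rewrite ffunMnE (oneGA k A) ffunE mulr_natr.
  have [w Uw] := unit_lem hpi hn rU.
  have Ix : I x by rewrite -[x]mulr1 -Uw mulrA; apply: (IMr hI).
  have Iq : eqm I q 1.
    by rewrite /eqm (_ : q - 1 = f1 + x); [apply: (ID hI) | rewrite /x; ring].
  change (eqm I f g).
  apply: (eqm_trans hI (y := q * g)).
    rewrite /q -mulrA (mulrC Sg) -{1}(mulr1 (f : GA R A)).
    by apply: (eqm_mul hI); [exact: (eqm_refl hI) | exact: (eqm_sym hI A1)].
  rewrite -{2}(mul1r (g : GA R A)).
  by apply: (eqm_mul hI); [exact: Iq | exact: (eqm_refl hI)].
- move=> u [eu gu].
  pose J := red_ideal pi I.
  have sJ : subsp J.
    split.
    - exists 0; split; first exact: (I0 hI).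
      by apply/ffunP => a; rewrite !ffunE rmorph0.
    - move=> f g [f0 [If0 ->]] [g0 [Ig0 ->]]; exists (f0 - g0); split.
        exact: (IB hI).
      by apply/ffunP => a; rewrite !ffunE /= ?ffunE rmorphB.
    - move=> t f [f0 [If0 ->]]; have [r <-] := hsurj t.
      pose rc : GA R A := [ffun a => (a == 0)%:R * r].
      exists (rc * f0); split; first exact: (IM hI).
      apply/ffunP => c; rewrite !ffunE rmorph_sum (bigD1 0) //= big1 ?addr0.
        by rewrite !ffunE eqxx mul1r subr0 rmorphM.
      by move=> a /negPf na; rewrite !ffunE na mul0r mul0r rmorph0.
  have Jeps : forall f, J f -> counit f = 0.
    move=> f [f0 [If0 ->]]; rewrite counit_red.
    by case: hH => _ _ H _; rewrite H // rmorph0.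
  have Jcom : forall f, J f -> in_tensor_ideal J (comult f).
    move=> f [f0 [If0 ->]].
    have H : in_tensor_ideal I (comult f0) by case: hH => _ H _ _; apply: H.
    by apply: (TI_ext _ (TI_red pi H)) => a b; rewrite comult_red.
  have [c Jc] := Klem sJ Jeps Jcom eu gu.
  exists (ee c); split; first exact: gl_ee.
  rewrite red_ee.
  case: sJ => J0 JB _.
  have := JB _ _ J0 Jc.
  by rewrite sub0r opprB.
Qed.
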